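(* Let $\mathbf{v}_1,\dots,\mathbf{v}_n\in\mathbb{R}^d$, not all zero, let $V=[\mathbf{v}_1,\dots,\mathbf{v}_n]\in\mathbb{R}^{d\times n}$ and $A=V^TV$. Let $0<\epsilon\le1$ and let $\underline{N}^{\epsilon}$ be the least dimension of a linear subspace $S\subseteq\mathbb{R}^d$ such that $\frac{\sum_{i=1}^n\|\mathbf{v}_i-P_S\mathbf{v}_i\|_2^2}{\sum_{i=1}^n\|\mathbf{v}_i\|_2^2}\le\epsilon^2$, where $P_S$ is the orthogonal projection onto $S$. Then $$\underline{N}^{\epsilon}\ge\frac{\left(\sum_{i=1}^n\|\mathbf{v}_i\|_2^2\right)^2(1-\epsilon^2)^2}{\sum_{i,j=1}^n(\mathbf{v}_i\cdot\mathbf{v}_j)^2}=\frac{\operatorname{tr}(A)^2(1-\epsilon^2)^2}{\|A\|_F^2}.$$ *)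

(* Defs.v *)
From HB Require Import structures.
From mathcomp Require Import all_boot all_order all_algebra.
From mathcomp Require Import reals.
Set Implicit Arguments. Unset Strict Implicit. Unset Printing Implicit Defensive.
Import Order.TTheory GRing.Theory Num.Theory.
Local Open Scope ring_scope.

Definition dotv (R : realType) (d : nat) (u w : 'rV[R]_d) : R := (u *m w^T) 0 0.
Definition norm2 (R : realType) (d : nat) (u : 'rV[R]_d) : R := dotv u u.

Definition vcol (R : realType) (d n : nat) (V : 'M[R]_(d, n)) (i : 'I_n) : 'rV[R]_d :=
  (col i V)^T.

(* P is the orthogonal projection onto the linear subspace S of R^d
   (S given as the row space of a d x d matrix, dim S = \rank S):
   P x lies in S and x - P x is orthogonal to every element of S. *)
Definition is_orth_proj (R : realType) (d : nat) (S : 'M[R]_d)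
    (P : 'rV[R]_d -> 'rV[R]_d) : Prop :=
  forall x : 'rV[R]_d, (P x <= S)%MS /\
    (forall s : 'rV[R]_d, (s <= S)%MS -> dotv (x - P x) s = 0).

Definition rel_err (R : realType) (d n : nat) (V : 'M[R]_(d, n))
    (P : 'rV[R]_d -> 'rV[R]_d) : R :=
  (\sum_(i < n) norm2 (vcol V i - P (vcol V i))) / (\sum_(i < n) norm2 (vcol V i)).

(* Main.v *)
Require Import Defs.
From HB Require Import structures.
From mathcomp Require Import all_boot all_order all_algebra.
From mathcomp Require Import reals ring lra.
Import Order.TTheory GRing.Theory Num.Theory.
Local Open Scope ring_scope.

Section Aux.
Context {R : realType}.

Lemma dotvE d (u w : 'rV[R]_d) : dotv u w = \sum_j u 0 j * w 0 j.
Proof. by rewrite /dotv mxE; apply: eq_bigr => j _; rewrite mxE. Qed.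

Lemma dotvC d (u w : 'rV[R]_d) : dotv u w = dotv w u.
Proof. by rewrite !dotvE; apply: eq_bigr => j _; rewrite mulrC. Qed.

Lemma dotvDl d (u u' w : 'rV[R]_d) : dotv (u + u') w = dotv u w + dotv u' w.
Proof. by rewrite !dotvE -big_split; apply: eq_bigr => j _; rewrite mxE mulrDl. Qed.

Lemma dotvNl d (u w : 'rV[R]_d) : dotv (- u) w = - dotv u w.
Proof. by rewrite !dotvE -sumrN; apply: eq_bigr => j _; rewrite mxE mulNr. Qed.

Lemma dotvBl d (u u' w : 'rV[R]_d) : dotv (u - u') w = dotv u w - dotv u' w.
Proof. by rewrite dotvDl dotvNl. Qed.

Lemma dotvBr d (u u' w : 'rV[R]_d) : dotv w (u - u') = dotv w u - dotv w u'.
Proof. by rewrite dotvC dotvBl !(dotvC _ w). Qed.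

Lemma norm2E d (u : 'rV[R]_d) : norm2 u = \sum_j u 0 j ^+ 2.
Proof. by rewrite /norm2 dotvE; apply: eq_bigr => j _; rewrite expr2. Qed.

Lemma norm2_ge0 d (u : 'rV[R]_d) : 0 <= norm2 u.
Proof. by rewrite norm2E sumr_ge0 // => j _; rewrite sqr_ge0. Qed.

Lemma norm2_eq0 d (u : 'rV[R]_d) : norm2 u = 0 -> u = 0.
Proof.
rewrite norm2E => H; apply/matrixP => i j; rewrite mxE.
have := psumr_eq0P (fun j _ => sqr_ge0 (u 0 j)) H.
move=> /(_ j isT) /eqP; rewrite sqrf_eq0 => /eqP.
by move: (ord1 i) => ->.
Qed.

Lemma CS_sum (I : finType) (x y : I -> R) :
  (\sum_i x i * y i) ^+ 2 <= (\sum_i x i ^+ 2) * (\sum_i y i ^+ 2).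
Proof.
set a := \sum_i x i ^+ 2; set b := \sum_i y i ^+ 2; set c := \sum_i x i * y i.
have b0 : 0 <= b by rewrite sumr_ge0 // => i _; rewrite sqr_ge0.
have a0 : 0 <= a by rewrite sumr_ge0 // => i _; rewrite sqr_ge0.
have [bz|bp] := eqVneq b 0.
  have yz : forall i, y i = 0.
    move=> i; have := psumr_eq0P (fun j _ => sqr_ge0 (y j)) bz.
    by move=> /(_ i isT) /eqP; rewrite sqrf_eq0 => /eqP.
  rewrite /c big1 ?expr0n ?mulr_ge0 // => i _; by rewrite yz mulr0.
have bpos : 0 < b by rewrite lt_def bp b0.
have H : 0 <= \sum_i (b * x i - c * y i) ^+ 2 by rewrite sumr_ge0 // => i _; rewrite sqr_ge0.
have E : \sum_i (b * x i - c * y i) ^+ 2 = b * (a * b - c ^+ 2).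
  have -> : \sum_i (b * x i - c * y i) ^+ 2 =
     \sum_i (b ^+ 2 * x i ^+ 2 - (b * c *+ 2) * (x i * y i) + c ^+ 2 * y i ^+ 2).
    by apply: eq_bigr => i _; rewrite sqrrB !exprMn; ring.
  rewrite big_split sumrB /= -!mulr_sumr -/a -/b -/c.
  clearbody a b c; ring.
rewrite E in H.
by move: H; rewrite pmulr_rge0 // subr_ge0.
Qed.

Definition fro {a b} (X Y : 'M[R]_(a, b)) := \tr (X *m Y^T).

Lemma froE a b (X Y : 'M[R]_(a, b)) : fro X Y = \sum_i \sum_j X i j * Y i j.
Proof.
rewrite /fro /mxtrace; apply: eq_bigr => i _; rewrite mxE.
by apply: eq_bigr => j _; rewrite mxE.
Qed.

Lemma fro_rows a b (X : 'M[R]_(a, b)) : fro X X = \sum_i norm2 (row i X).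
Proof.
rewrite froE; apply: eq_bigr => i _; rewrite norm2E.
by apply: eq_bigr => j _; rewrite mxE expr2.
Qed.

Lemma fro_ge0 a b (X : 'M[R]_(a, b)) : 0 <= fro X X.
Proof. by rewrite fro_rows sumr_ge0 // => i _; exact: norm2_ge0. Qed.

Lemma fro_CS a b (X Y : 'M[R]_(a, b)) : fro X Y ^+ 2 <= fro X X * fro Y Y.
Proof.
rewrite !froE !pair_bigA /=.
have E : forall Z : 'M[R]_(a, b), \sum_(p : 'I_a * 'I_b) Z p.1 p.2 * Z p.1 p.2 = \sum_(p : 'I_a * 'I_b) (Z p.1 p.2) ^+ 2.
  by move=> Z; apply: eq_bigr => p _; rewrite expr2.
rewrite !E.
have := CS_sum _ (fun p : ('I_a * 'I_b)%type => X p.1 p.2) (fun p => Y p.1 p.2); exact.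
Qed.

Lemma fro_tr a b (X : 'M[R]_(a, b)) : fro X X = fro X^T X^T.
Proof. by rewrite /fro trmxK mxtrace_mulC. Qed.

Lemma dotvDr d (u u' w : 'rV[R]_d) : dotv w (u + u') = dotv w u + dotv w u'.
Proof. by rewrite dotvC dotvDl !(dotvC _ w). Qed.

Lemma pyth d (x y : 'rV[R]_d) : dotv y (x - y) = 0 ->
  norm2 x = norm2 y + norm2 (x - y).
Proof.
move=> H; have -> : norm2 x = norm2 (y + (x - y)) by rewrite addrC subrK.
rewrite /norm2 dotvDl (dotvDr _ y (x - y) y) (dotvDr _ y (x - y) (x - y)) H (dotvC _ (x - y) y) H; lra.
Qed.

Lemma shrink d (Pi : 'M[R]_d) : Pi^T = Pi -> Pi *m Pi = Pi ->
  forall a (X : 'M[R]_(a, d)), fro (X *m Pi) (X *m Pi) <= fro X X.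
Proof.
move=> hT hP a X; rewrite !fro_rows; apply: ler_sum => i _.
rewrite row_mul; set x := row i X.
rewrite (pyth _ x (x *m Pi)) ?lerDl ?norm2_ge0 //.
rewrite /dotv linearB /= mulmxBr trmx_mul hT !mulmxA -(mulmxA x Pi Pi) hP.
by rewrite subrr mxE.
Qed.

Lemma proj_exists d (S : 'M[R]_d) : exists Pi : 'M[R]_d,
  [/\ Pi^T = Pi, Pi *m Pi = Pi, \tr Pi = (\rank S)%:R,
      (forall x : 'rV_d, (x *m Pi <= S)%MS) &
      (forall x s : 'rV_d, (s <= S)%MS -> dotv (x - x *m Pi) s = 0)].
Proof.
set B := row_base S; set K := B *m B^T.
have Bfree : row_free B by exact: row_base_free.
have BS : (B :=: S)%MS by exact: eq_row_base.
have rkB : \rank B = \rank S by rewrite BS.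
clearbody B.
have Ku : K \in unitmx.
  rewrite -row_free_unit; apply: inj_row_free => v vK.
  have : norm2 (v *m B) = 0.
    by rewrite /norm2 /dotv trmx_mul !mulmxA -(mulmxA v B) vK mul0mx mxE.
  move/norm2_eq0 => vB.
  apply: (row_free_inj Bfree); by rewrite vB mul0mx.
set G := invmx K.
have KT : K^T = K by rewrite /K trmx_mul trmxK.
have GK : G *m K = 1%:M by rewrite mulVmx.
have KG : K *m G = 1%:M by rewrite mulmxV.
have HG : forall m (X : 'M_(m, _)), X *m G *m B *m B^T = X.
  by move=> m X; rewrite -(mulmxA _ B) -/K -mulmxA GK mulmx1.
exists (B^T *m G *m B); split.
- by rewrite !trmx_mul trmxK /G trmx_inv KT mulmxA.
- by rewrite !mulmxA HG.
- by rewrite mxtrace_mulC mulmxA -/K KG mxtrace1.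
- move=> x; rewrite !mulmxA; apply: submx_trans (submxMl _ _) _.
  by rewrite BS submx_refl.
- move=> x s sS; have : (s <= B)%MS by rewrite BS.
  case/submxP => D ->.
  rewrite /dotv trmx_mul mulmxA mulmxBl !mulmxA HG subrr mul0mx mxE //.
Qed.

Lemma P_eq d (S : 'M[R]_d) P (Pi : 'M[R]_d) : is_orth_proj S P ->
  (forall x : 'rV_d, (x *m Pi <= S)%MS) ->
  (forall x s : 'rV_d, (s <= S)%MS -> dotv (x - x *m Pi) s = 0) ->
  forall x, P x = x *m Pi.
Proof.
move=> hP h1 h2 x; apply/eqP; rewrite -subr_eq0; apply/eqP.
have uS : (P x - x *m Pi <= S)%MS.
  by rewrite addmx_sub ?(hP x).1 // -scaleN1r scalemx_sub.
apply: norm2_eq0.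
have E : P x - x *m Pi = (x - x *m Pi) - (x - P x).
  by rewrite opprB [in RHS]addrC addrA subrK.
by rewrite /norm2 {1}E dotvBl h2 // (hP x).2 // subrr.
Qed.
End Aux.

Theorem mainTheorem5 (R : realType) (d n : nat) (V : 'M[R]_(d, n)) (eps : R) :
  V != 0 -> 0 < eps -> eps <= 1 ->
  (forall (S : 'M[R]_d) (P : 'rV[R]_d -> 'rV[R]_d),
      is_orth_proj S P -> rel_err V P <= eps ^+ 2 ->
      (\sum_(i < n) norm2 (vcol V i)) ^+ 2 * (1 - eps ^+ 2) ^+ 2
        / (\sum_(i < n) \sum_(j < n) dotv (vcol V i) (vcol V j) ^+ 2)
      <= (\rank S)%:R)
  /\
  (\sum_(i < n) norm2 (vcol V i)) ^+ 2 * (1 - eps ^+ 2) ^+ 2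
    / (\sum_(i < n) \sum_(j < n) dotv (vcol V i) (vcol V j) ^+ 2)
  = (\tr (V^T *m V)) ^+ 2 * (1 - eps ^+ 2) ^+ 2
    / (\sum_(i < n) \sum_(j < n) ((V^T *m V) i j) ^+ 2).
Proof.
move=> V0 e0 e1.
have vE : forall i j, dotv (vcol V i) (vcol V j) = (V^T *m V) i j.
  by move=> i j; rewrite dotvE mxE; apply: eq_bigr => k _; rewrite !mxE.
have TE : \sum_i norm2 (vcol V i) = \tr (V^T *m V).
  by rewrite /mxtrace; apply: eq_bigr => i _; rewrite /norm2 vE.
split; last first.
  rewrite TE; congr (_ * _ / _); apply: eq_bigr => i _; apply: eq_bigr => j _.
  by rewrite vE.
move=> S P hP hE.
have [Pi [PiT PiP trPi h1 h2]] := proj_exists _ S.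
have PE := P_eq _ _ _ _ hP h1 h2.
set W := V^T.
have vW : forall i, vcol V i = row i W by move=> i; rewrite /vcol tr_col.
set T := \sum_i norm2 (vcol V i).
set Tp := \sum_i norm2 (P (vcol V i)).
set Er := \sum_i norm2 (vcol V i - P (vcol V i)).
have TTp : T = Tp + Er.
  rewrite /T /Tp /Er -big_split /=; apply: eq_bigr => i _.
  apply: pyth; rewrite dotvC; exact: (hP _).2 (hP _).1.
have Tpos : 0 < T.
  rewrite lt_def sumr_ge0 ?andbT; last by move=> i _; exact: norm2_ge0.
  apply/eqP => /psumr_eq0P H; move/eqP: V0; apply.
  rewrite -[V]trmxK -/W; apply/eqP; rewrite trmx_eq0; apply/eqP/row_matrixP => i.
  by rewrite row0 -vW; apply: norm2_eq0; apply: H => // j _; exact: norm2_ge0.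
have ErT : Er <= eps ^+ 2 * T by rewrite -ler_pdivrMr.
have TpE : Tp = fro (W *m Pi) (W *m Pi).
  by rewrite fro_rows /Tp; apply: eq_bigr => i _; rewrite PE vW row_mul.
set M := W^T *m W.
have MT : M^T = M by rewrite /M trmx_mul trmxK.
set N := Pi *m M *m Pi.
have NT : N^T = N by rewrite /N trmx_mul (trmx_mul Pi M) PiT MT mulmxA.
have TpN : Tp = fro Pi N.
  rewrite TpE /fro NT (trmx_mul W Pi) PiT /N /M.
  rewrite !mulmxA PiP -(mulmxA W Pi Pi) PiP mxtrace_mulC !mulmxA.
  rewrite [RHS]mxtrace_mulC !mulmxA PiP -(mulmxA Pi W^T W) (mxtrace_mulC Pi).
  done.
set F := \sum_i \sum_j dotv (vcol V i) (vcol V j) ^+ 2.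
have FE : F = fro M M.
  have -> : F = fro (W *m W^T) (W *m W^T).
    rewrite froE; apply: eq_bigr => i _; apply: eq_bigr => j _.
    by rewrite !vW dotvE mxE expr2; congr (_ * _); apply: eq_bigr => k _; rewrite !mxE.
  rewrite /fro /M !trmx_mul !trmxK !mulmxA mxtrace_mulC !mulmxA.
  done.
have fPi : fro Pi Pi = (\rank S)%:R by rewrite /fro PiT PiP.
have NF : fro N N <= F.
  rewrite FE; apply: le_trans (shrink _ _ PiT PiP _ (Pi *m M)) _.
  rewrite fro_tr trmx_mul PiT MT.
  exact: shrink _ _ PiT PiP _ M.
have TpF : Tp ^+ 2 <= (\rank S)%:R * F.
  rewrite TpN; apply: le_trans (fro_CS _ _ _ _) _.
  by rewrite fPi ler_wpM2l // ler0n.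
have [F0|Fn0] := eqVneq F 0.
  by rewrite F0 invr0 mulr0 ler0n.
have Fpos : 0 < F by rewrite lt_def Fn0 FE fro_ge0.
rewrite ler_pdivrMr // -exprMn.
apply: le_trans TpF.
have e2 : eps ^+ 2 <= 1 by rewrite expr_le1 // ltW.
have h0 : 0 <= T * (1 - eps ^+ 2) by rewrite mulr_ge0 ?subr_ge0 // ltW.
have hle : T * (1 - eps ^+ 2) <= Tp by rewrite mulrBr mulr1; lra.
by rewrite !expr2 ler_pM.
Qed.
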